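(* Let $n\ge1$ and let $\phi,\psi$ be characters of $S_n$. Then $d_\phi^{S_n}(A)=d_\psi^{S_n}(A)$ for every $A\in\mathbb S_n(\mathbb C)$ if and only if $\phi=\psi$.
   Context: A character of a group $G\le S_n$ is a function $g\mapsto\operatorname{tr}(\rho(g))$ for some homomorphism $\rho:G\to GL_m(\mathbb C)$, $m\ge1$. $\mathbb S_n(\mathbb C)$ is the set of complex symmetric $n\times n$ matrices. For $\chi:S_n\to\mathbb C$, $d_\chi^{S_n}(A)=\sum_{\sigma\in S_n}\chi(\sigma)\prod_{i=1}^n A_{i\,\sigma(i)}$. *)

(* Defs.v *)
From HB Require Import structures.
From mathcomp Require Import all_boot all_order all_algebra all_fingroup.
From mathcomp Require Import mxrepresentation.
Set Implicit Arguments. Unset Strict Implicit. Unset Printing Implicit Defensive.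
Import GRing.Theory Num.Theory.
Local Open Scope ring_scope.

Definition is_Sn_character (C : numClosedFieldType) (n : nat)
    (chi : {perm 'I_n} -> C) : Prop :=
  exists (m : nat) (rG : mx_representation C [set: {perm 'I_n}]%G m.+1),
    forall s : {perm 'I_n}, chi s = \tr (rG s).

Definition dSn (C : numClosedFieldType) (n : nat)
    (chi : {perm 'I_n} -> C) (A : 'M[C]_n) : C :=
  \sum_(s : {perm 'I_n}) chi s * \prod_(i < n) A i (s i).

(* Main.v *)
Require Import Defs.
From HB Require Import structures.
From mathcomp Require Import all_boot all_order all_algebra all_fingroup.
From mathcomp Require Import mxrepresentation.
Set Implicit Arguments. Unset Strict Implicit. Unset Printing Implicit Defensive.
Import GRing.Theory Num.Theory.

Section Conj.
Variable T : finType.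
Variables s t : {perm T}.
Hypothesis orb : forall x, porbit t x = porbit s x.

Definition rr x := odflt x [pick y in porbit s x].

Lemma rr_in x : rr x \in porbit s x.
Proof. by rewrite /rr; case: pickP => [y ->|/(_ x)]; rewrite ?porbit_id. Qed.

Lemma rr_eq x y : porbit s x = porbit s y -> rr x = rr y.
Proof.
rewrite /rr => E; rewrite E; case: pickP => // H.
by have := H y; rewrite porbit_id.
Qed.

Lemma porbit_rr x : porbit s (rr x) = porbit s x.
Proof. by apply/eqP; rewrite eq_porbit_mem rr_in. Qed.

Definition kk x := #|porbit s x|.
Definition mm x := index x (traject s (rr x) (kk x)).
Definition g0 x := iter (mm x) t (rr x).

Lemma iter_mem (u : {perm T}) j x : iter j u x \in porbit u x.
Proof. by rewrite -permX mem_porbit. Qed.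

Lemma kk_gt0 x : 0 < kk x.
Proof. by rewrite lt0n card_porbit_neq0. Qed.

Lemma mm_spec x : mm x < kk x /\ iter (mm x) s (rr x) = x.
Proof.
have Hx : x \in traject s (rr x) (kk x).
  by rewrite /kk -porbit_rr -porbit_traject porbit_rr porbit_id.
have Hl : mm x < kk x by rewrite /mm -[X in _ < X](size_traject s (rr x)) index_mem.
split => //; rewrite -(nth_traject _ Hl) /mm nth_index //.
Qed.

Lemma iter_mod (u : {perm T}) x j : iter j u x = iter (j %% #|porbit u x|) u x.
Proof.
rewrite {1}(divn_eq j #|porbit u x|) addnC iterD; congr (iter _ _ _).
elim: (j %/ _) => //= q IH; by rewrite mulSn iterD IH iter_porbit.
Qed.

Lemma g0_iter x j : g0 (iter j s (rr x)) = iter j t (rr x).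
Proof.
set y := iter j s (rr x).
have Py : porbit s y = porbit s x.
  by rewrite -(porbit_rr x); apply/eqP; rewrite eq_porbit_mem iter_mem.
have Ry : rr y = rr x by apply: rr_eq.
have Ky : kk y = kk x by rewrite /kk Py.
have [Hl Hy] := mm_spec y.
rewrite /g0 Ry; rewrite Ry Ky in Hl Hy.
have Ks : #|porbit s (rr x)| = kk x by rewrite porbit_rr.
have Kt : #|porbit t (rr x)| = kk x by rewrite orb porbit_rr.
have Hjm : j %% kk x < kk x by rewrite ltn_pmod // kk_gt0.
have E : mm y = j %% kk x.
  apply/eqP; rewrite -(nth_uniq (rr x) (s:=traject s (rr x) (kk x))) ?size_traject //;
    last by rewrite -Ks uniq_traject_porbit.
  by rewrite !nth_traject // Hy /y (iter_mod s) Ks.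
by rewrite E [in RHS](iter_mod t) Kt.
Qed.

Lemma g0_comm x : g0 (s x) = t (g0 x).
Proof.
have [_ Hx] := mm_spec x.
have -> : s x = iter (mm x).+1 s (rr x) by rewrite iterS Hx.
by rewrite g0_iter.
Qed.

Lemma g0_orb x : g0 x \in porbit s x.
Proof. by rewrite /g0 -porbit_rr -orb iter_mem. Qed.

Lemma g0_inj : injective g0.
Proof.
move=> x y E.
have Pxy : porbit s x = porbit s y.
  have H1 : porbit s (g0 y) = porbit s x by apply/eqP; rewrite eq_porbit_mem -E g0_orb.
  have H2 : porbit s (g0 y) = porbit s y by apply/eqP; rewrite eq_porbit_mem g0_orb.
  by rewrite -H1 H2.
have Rxy := rr_eq Pxy.
have Kxy : kk y = kk x by rewrite /kk Pxy.
have [Hlx Hx] := mm_spec x; have [Hly Hy] := mm_spec y.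
rewrite Kxy in Hly; rewrite -Rxy in Hy.
have Kt : #|porbit t (rr x)| = kk x by rewrite orb porbit_rr.
have : mm x = mm y.
  apply/eqP; rewrite -(nth_uniq (rr x) (s:=traject t (rr x) (kk x))) ?size_traject //;
    last by rewrite -Kt uniq_traject_porbit.
  by rewrite !nth_traject // -/(g0 x) E /g0 Rxy.
by move=> Em; rewrite -Hx -Hy Em.
Qed.

Lemma conj_exists : exists g : {perm T}, t = (s ^ g)%g.
Proof.
set g := perm g0_inj.
exists g; apply/permP => x.
rewrite /conjg !permM.
have H := g0_comm ((g^-1)%g x).
have E : g0 ((g^-1)%g x) = x by rewrite -{1}(permE g0_inj) -/g permKV.
by rewrite {2}/g permE H E.
Qed.
End Conj.

Local Open Scope ring_scope.

Lemma char_class (C : numClosedFieldType) (n : nat) (chi : {perm 'I_n} -> C) :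
  is_Sn_character chi -> forall s g, chi (s ^ g)%g = chi s.
Proof.
move=> [m [rG HrG]] s g; rewrite !HrG /conjg.
rewrite !repr_mxM ?in_setT // mxtrace_mulC -mulmxA -repr_mxM ?in_setT //.
by rewrite mulgV repr_mx1 mulmx1.
Qed.

Section Graph.
Variable n : nat.
Implicit Types s t : {perm 'I_n}.

Definition gr s := [set p : 'I_n * 'I_n | (s p.1 == p.2) || (s p.2 == p.1)].

Lemma gr_sym s i j : ((i, j) \in gr s) = ((j, i) \in gr s).
Proof. by rewrite !inE /= orbC. Qed.

Lemma porbit_sub (s t : {perm 'I_n}) : (forall y, t y \in porbit s y) ->
  forall x, porbit t x \subset porbit s x.
Proof.
move=> H x; apply/subsetP => z /porbitP [i ->]; rewrite permX.
elim: i => [|i IH] /=; first exact: porbit_id.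
have E : porbit s (iter i t x) = porbit s x by apply/eqP; rewrite eq_porbit_mem.
by rewrite -E H.
Qed.

Lemma gr_mem s t : gr t = gr s -> forall y, t y \in porbit s y.
Proof.
move=> E y.
have : (y, t y) \in gr s by rewrite -E inE /= eqxx.
rewrite inE /= => /orP [/eqP <- | /eqP H].
  by have := mem_porbit s 1 y; rewrite expg1.
by rewrite porbit_sym -{1}H; have := mem_porbit s 1 (t y); rewrite expg1.
Qed.

Lemma gr_porbit s t : gr t = gr s -> forall x, porbit t x = porbit s x.
Proof.
move=> E x; apply/eqP; rewrite eqEsubset !porbit_sub //; exact: gr_mem.
Qed.

Lemma gr_conj s t : gr t = gr s -> exists g, t = (s ^ g)%g.
Proof. by move=> E; apply: conj_exists; apply: gr_porbit. Qed.

Lemma gr_subP s t : reflect (forall i, (i, t i) \in gr s) (gr t \subset gr s).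
Proof.
apply: (iffP subsetP) => [H i | H [p1 p2]].
  by apply: H; rewrite inE /= eqxx.
rewrite inE /= => /orP [/eqP <- | /eqP <-]; first exact: H.
by rewrite gr_sym H.
Qed.
End Graph.

Theorem mainTheorem9 (C : numClosedFieldType) (n : nat) (hn : (0 < n)%N)
    (phi psi : {perm 'I_n} -> C) :
  is_Sn_character phi -> is_Sn_character psi ->
  ((forall A : 'M[C]_n, A^T = A -> dSn phi A = dSn psi A) <-> phi =1 psi).
Proof.
move=> Hphi Hpsi; split; last first.
  by move=> E A _; rewrite /dSn; apply: eq_bigr => s _; rewrite E.
move=> H.
pose F s := phi s - psi s.
have FJ : forall s g, F (s ^ g)%g = F s.
  by move=> s g; rewrite /F !char_class.
pose A (s : {perm 'I_n}) : 'M[C]_n := \matrix_(i, j) (((i, j) \in gr s) : nat)%:R.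
have AT : forall s, (A s)^T = A s.
  by move=> s; apply/matrixP => i j; rewrite !mxE gr_sym.
have prodA : forall s (t : {perm 'I_n}), \prod_(i < n) A s i (t i) = ((gr t \subset gr s) : nat)%:R.
  move=> s t; case: gr_subP => [Hs | Hs].
    by apply: big1 => i _; rewrite mxE Hs.
  have [i Hi] : exists i, (i, t i) \notin gr s.
    by apply/existsP; rewrite -negb_forall; apply/negP => /forallP Hf; apply: Hs.
  by rewrite (bigD1 i) //= mxE (negbTE Hi) mul0r.
have Hsub : forall s, \sum_(t | gr t \subset gr s) F t = 0.
  move=> s; have := H (A s) (AT s); rewrite /dSn => /eqP; rewrite -subr_eq0 -sumrB.
  move=> /eqP E; rewrite big_mkcond /= -[RHS]E; apply: eq_bigr => t _.
  by rewrite -mulrBl prodA; case: (_ \subset _); rewrite ?mulr1 ?mulr0.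
have Heq : forall N s, (#|gr s| < N)%N -> \sum_(t | gr t == gr s) F t = 0.
  elim=> [|N IH] s //; rewrite ltnS => Hs.
  have := Hsub s; rewrite (bigID (fun t => gr t == gr s)) /=.
  rewrite (eq_bigl (fun t => gr t == gr s)); last first.
    by move=> t; case: eqP => [->|_]; rewrite ?subxx ?andbF.
  rewrite [X in _ + X](eq_bigl (fun t => gr t \proper gr s)); last first.
    by move=> t; rewrite properEneq andbC.
  rewrite [X in _ + X](partition_big (@gr n) (fun G => G \proper gr s)) //=.
  rewrite [X in _ + X]big1 ?addr0 // => G HG.
  case: (pickP (fun t => gr t == G)) => [t0 /eqP Ht0 | Hn].
    rewrite (eq_bigl (fun t => gr t == gr t0)); last first.
      by move=> t; rewrite Ht0; case: eqP => [->|_]; rewrite ?HG ?andbF.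
    apply: IH; rewrite Ht0; apply: leq_trans Hs; exact: proper_card.
  by apply: big1 => t /andP [_ Ht]; move: (Hn t); rewrite Ht.
move=> s; apply/eqP; rewrite -subr_eq0 -/(F s); apply/eqP.
have := Heq (#|gr s|.+1) s (ltnSn _).
rewrite (eq_bigr (fun _ => F s)); last first.
  by move=> t /eqP /gr_conj [g ->]; rewrite FJ.
rewrite sumr_const => /eqP; rewrite mulrn_eq0 => /orP [|/eqP //].
move=> /eqP /card0_eq /(_ s) E; have : s \in pred0 by rewrite -E; exact: (eqxx (gr s)).
by rewrite inE.
Qed.
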